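(* In the setting described in the context, let $(x^k)$, $(\bar x^k)$, $(\alpha_k)$ be the sequences generated by the Conceptual Algorithm (with either Method 1 or Method 2). Then for every $k$ for which these are defined: (i) $\dfrac{x^k-\bar x^k}{\alpha_k}-(A_2x^k-A_2\bar x^k)\in (A_2+B)\bar x^k+A_1x^k$; (ii) $\operatorname{zer}(A+B)\subseteq T_k$.
   Context: Let $\mathcal H$ be a real Hilbert space with inner product $\langle\cdot,\cdot\rangle$ and norm $\|\cdot\|$. Let $A_1:\mathcal H\to\mathcal H$ be $\beta$-cocoercive for some $\beta>0$ (i.e. $\langle A_1x-A_1y,x-y\rangle\ge\beta\|A_1x-A_1y\|^2$ for all $x,y$), let $A_2:\mathcal H\to\mathcal H$ be maximally monotone and uniformly continuous, let $B:\mathcal H\rightrightarrows\mathcal H$ be maximally monotone, and set $A:=A_1+A_2$. Assume $\operatorname{zer}(A+B):=\{x:0\in Ax+Bx\}\neq\emptyset$. $J_{\alpha B}:=(I+\alpha B)^{-1}$ for $\alpha>0$, and $P_C$ denotes the orthogonal projection onto a nonempty closed convex set $C$. Fix $\theta,\delta\in(0,1)$, $\bar\delta>0$ with $1-\delta-\bar\delta>0$, and $\alpha_{-1}>0$ with $\alpha_{-1}\le4\beta\bar\delta$. Conceptual Algorithm: pick $x^0\in\mathcal H$. Given $x^k$ and $\alpha_{k-1}$, for $j\in\mathbb N$ let $\bar x^k_j:=J_{\alpha_{k-1}\theta^jB}(x^k-\alpha_{k-1}\theta^jAx^k)$ and let $j(k)$ be the smallest $j\in\mathbb N$ with $\alpha_{k-1}\theta^j\langle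 A_2x^k-A_2\bar x^k_j,x^k-\bar x^k_j\rangle\le\delta\|x^k-\bar x^k_j\|^2$. Set $\alpha_k:=\alpha_{k-1}\theta^{j(k)}$, $\bar x^k:=J_{\alpha_kB}(x^k-\alpha_kAx^k)$, $r_k:=\frac{\bar\delta}{\alpha_k}\|x^k-\bar x^k\|^2$, $T_k:=\{x\in\mathcal H:\langle \frac{x^k-\bar x^k}{\alpha_k}-(A_2x^k-A_2\bar x^k),x-\bar x^k\rangle\le r_k\}$ and $\Gamma_k:=\{x\in\mathcal H:\langle x^0-x^k,x-x^k\rangle\le0\}$. Method 1 sets $x^{k+1}:=P_{T_k}(x^k)$; Method 2 sets $x^{k+1}:=P_{T_k\cap\Gamma_k}(x^0)$. The algorithm stops if $x^{k+1}=x^k$. *)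

(* Defs.v *)
From mathcomp Require Import all_boot all_order all_algebra.
From mathcomp Require Import reals.
Set Implicit Arguments. Unset Strict Implicit. Unset Printing Implicit Defensive.
Import Order.TTheory GRing.Theory Num.Theory.
Local Open Scope ring_scope.

Section Hilbert.
Variables (R : realType) (V : lmodType R) (ip : V -> V -> R).

Definition inner_product : Prop :=
  [/\ (forall x y, ip x y = ip y x),
      (forall a x y z, ip (a *: x + y) z = a * ip x z + ip y z)
    & (forall x, x != 0 -> 0 < ip x x)].

Definition hnorm (x : V) : R := Num.sqrt (ip x x).

Definition hcomplete : Prop :=
  forall u : nat -> V,
    (forall e, 0 < e -> exists N, forall m n, (N <= m)%N -> (N <= n)%N ->
         hnorm (u m - u n) < e) ->
    exists l, forall e, 0 < e -> exists N, forall n, (N <= n)%N ->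
         hnorm (u n - l) < e.

Definition hilbert : Prop := inner_product /\ hcomplete.

(* set-valued operators are relations: M x y  <->  y \in M x *)
Definition monotone_rel (M : V -> V -> Prop) : Prop :=
  forall x y u v, M x u -> M y v -> 0 <= ip (x - y) (u - v).

Definition maximally_monotone (M : V -> V -> Prop) : Prop :=
  monotone_rel M /\
  (forall x u, (forall y v, M y v -> 0 <= ip (x - y) (u - v)) -> M x u).

Definition graph (F : V -> V) : V -> V -> Prop := fun x y => y = F x.

Definition cocoercive (beta : R) (F : V -> V) : Prop :=
  forall x y, ip (F x - F y) (x - y) >= beta * (hnorm (F x - F y)) ^+ 2.

Definition uniformly_continuous (F : V -> V) : Prop :=
  forall e, 0 < e -> exists d, 0 < d /\
    forall x y, hnorm (x - y) < d -> hnorm (F x - F y) < e.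

Definition zer (A : V -> V) (B : V -> V -> Prop) (x : V) : Prop :=
  exists b, B x b /\ A x + b = 0.

(* p = J_{g B}(u)  <->  u \in (I + g B) p *)
Definition is_resolvent (B : V -> V -> Prop) (g : R) (u p : V) : Prop :=
  exists b, B p b /\ u = p + g *: b.

Definition is_proj (C : V -> Prop) (u p : V) : Prop :=
  C p /\ forall y, C y -> hnorm (u - p) <= hnorm (u - y).

Definition Tset (A2 : V -> V) (dbar : R) (xk xbk : V) (ak : R) : V -> Prop :=
  fun y => ip (ak^-1 *: (xk - xbk) - (A2 xk - A2 xbk)) (y - xbk)
           <= dbar / ak * (hnorm (xk - xbk)) ^+ 2.

Definition Gset (x0 xk : V) : V -> Prop :=
  fun y => ip (x0 - xk) (y - xk) <= 0.

(* alpha_{k-1}, with alpha_{-1} = am1 and alpha : nat -> R indexing alpha_k *)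
Definition alpha_prev (am1 : R) (alpha : nat -> R) (k : nat) : R :=
  if k is k'.+1 then alpha k' else am1.

Definition ls_ok (A1 A2 : V -> V) (B : V -> V -> Prop) (delta : R)
    (x : V) (g : R) : Prop :=
  forall p, is_resolvent B g (x - g *: (A1 x + A2 x)) p ->
    g * ip (A2 x - A2 p) (x - p) <= delta * (hnorm (x - p)) ^+ 2.

(* The iterates x^0..x^K, \bar x^0..\bar x^K, alpha_0..alpha_K, j(0)..j(K)
   are generated by the Conceptual Algorithm (Method 1 if meth = false,
   Method 2 if meth = true), without stopping before iteration K. *)
Definition generated (A1 A2 : V -> V) (B : V -> V -> Prop)
    (theta delta dbar am1 : R) (meth : bool)
    (x xbar : nat -> V) (alpha : nat -> R) (j : nat -> nat) (K : nat) : Prop :=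
  (forall k, (k <= K)%N ->
     [/\ ls_ok A1 A2 B delta (x k) (alpha_prev am1 alpha k * theta ^+ j k),
         (forall i, (i < j k)%N ->
            ~ ls_ok A1 A2 B delta (x k) (alpha_prev am1 alpha k * theta ^+ i)),
         alpha k = alpha_prev am1 alpha k * theta ^+ j k
       & is_resolvent B (alpha k) (x k - alpha k *: (A1 (x k) + A2 (x k)))
                      (xbar k)]) /\
  (forall k, (k < K)%N ->
     (if meth
      then is_proj (fun y => Tset A2 dbar (x k) (xbar k) (alpha k) y /\
                             Gset (x 0%N) (x k) y) (x 0%N) (x k.+1)
      else is_proj (Tset A2 dbar (x k) (xbar k) (alpha k)) (x k) (x k.+1))
     /\ x k.+1 != x k).

End Hilbert.

(* Main.v *)
Require Import Defs.
From mathcomp Require Import all_boot all_order all_algebra.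
From mathcomp Require Import reals.
From mathcomp Require Import lra.
Import Order.TTheory GRing.Theory Num.Theory.
Local Open Scope ring_scope.

Lemma L1 (V : zmodType) (p q r s : V) : q + (r + s) - (s - p) = p + q + r.
Proof. rewrite opprB addrA addrAC addrA addrK. by rewrite addrC addrA. Qed.
Lemma L2 (V : zmodType) (A1X A2Xb b A1z A2z bz : V) : A1z + A2z + bz = 0 ->
  A2Xb + b + A1X = (A1X - A1z) + ((A2Xb + b) - (A2z + bz)).
Proof. move=> h. rewrite addrACA -opprD (addrA A1z) h subr0. by rewrite addrC. Qed.
Lemma L3 (V : zmodType) (X Xb z : V) : z - Xb = (X - Xb) - (X - z).
Proof. by rewrite opprB [RHS]addrC addrA subrK. Qed.
Lemma L4 (V : zmodType) (X Xb z : V) : (X - z) - (X - Xb) = Xb - z.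
Proof. by rewrite opprB [LHS]addrC addrA subrK. Qed.
Lemma fin (R : realFieldType) (a b dbar am1 wd ww we md me dd : R) :
 0 < a -> 0 < b -> a <= am1 -> am1 <= 4 * b * dbar -> 0 <= dd ->
 0 <= me - md -> b * ww <= we ->
 0 <= 2 * b * (2 * b * ww) - 2 * b * wd - (2 * b * wd - dd) ->
 wd - we + (md - me) <= dbar / a * dd.
Proof.
move=> a0 b0 aa am h0 hm hc hp.
have h1 : wd - b * ww <= dd / (4 * b).
  rewrite ler_pdivlMr; last by rewrite mulr_gt0.
  nra.
have h2 : (4 * b)^-1 <= dbar / a.
  rewrite ler_pdivlMr // mulrC -ler_pdivlMr ?invr_gt0 ?mulr_gt0 // invrK; lra.
have h3 : dd / (4 * b) <= dbar / a * dd.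
  rewrite [dd / _]mulrC. exact: (ler_wpM2r h0 h2).
lra.
Qed.

Set Implicit Arguments.
Section Aux.
Variables (R : realType) (V : lmodType R) (ip : V -> V -> R).
Hypothesis Hip : inner_product ip.

Lemma ip0l z : ip 0 z = 0.
Proof.
case: Hip => _ L _; have := L 1 0 0 z; rewrite scaler0 addr0 mul1r.
lra.
Qed.
Lemma ipDl x y z : ip (x + y) z = ip x z + ip y z.
Proof. case: Hip => _ L _; by rewrite -[x]scale1r L mul1r scale1r. Qed.
Lemma ipZl a x z : ip (a *: x) z = a * ip x z.
Proof. case: Hip => _ L _; by rewrite -[a *: x]addr0 L ip0l addr0. Qed.
Lemma ipNl x z : ip (- x) z = - ip x z.
Proof. by rewrite -scaleN1r ipZl mulN1r. Qed.
Lemma ipBl x y z : ip (x - y) z = ip x z - ip y z.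
Proof. by rewrite ipDl ipNl. Qed.
Lemma ipC x y : ip x y = ip y x.
Proof. by case: Hip. Qed.
Lemma ipDr x y z : ip z (x + y) = ip z x + ip z y.
Proof. by rewrite ipC ipDl !(ipC z). Qed.
Lemma ipZr a x z : ip z (a *: x) = a * ip z x.
Proof. by rewrite ipC ipZl ipC. Qed.
Lemma ipNr x z : ip z (- x) = - ip z x.
Proof. by rewrite ipC ipNl ipC. Qed.
Lemma ipBr x y z : ip z (x - y) = ip z x - ip z y.
Proof. by rewrite ipDr ipNr. Qed.
Lemma ip_ge0 x : 0 <= ip x x.
Proof.
case: Hip => _ _ P; have [->|/P/ltW //] := eqVneq x 0; by rewrite ip0l.
Qed.
Lemma hnorm2 x : hnorm ip x ^+ 2 = ip x x.
Proof. by rewrite /hnorm sqr_sqrtr // ip_ge0. Qed.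
End Aux.
Unset Implicit Arguments.

Theorem lemma4p3 (R : realType) (V : lmodType R) (ip : V -> V -> R)
  (A1 A2 : V -> V) (B : V -> V -> Prop) (beta theta delta dbar am1 : R)
  (meth : bool) (x xbar : nat -> V) (alpha : nat -> R) (j : nat -> nat)
  (K : nat) :
  hilbert ip ->
  0 < beta -> cocoercive ip beta A1 ->
  maximally_monotone ip (graph A2) -> uniformly_continuous ip A2 ->
  maximally_monotone ip B ->
  (exists z, zer (fun y => A1 y + A2 y) B z) ->
  0 < theta < 1 -> 0 < delta < 1 -> 0 < dbar -> 0 < 1 - delta - dbar ->
  0 < am1 -> am1 <= 4 * beta * dbar ->
  generated ip A1 A2 B theta delta dbar am1 meth x xbar alpha j K ->
  forall k, (k <= K)%N ->
    (exists b, B (xbar k) b /\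
       (alpha k)^-1 *: (x k - xbar k) - (A2 (x k) - A2 (xbar k))
         = A2 (xbar k) + b + A1 (x k)) /\
    (forall z, zer (fun y => A1 y + A2 y) B z ->
       Tset ip A2 dbar (x k) (xbar k) (alpha k) z).
Proof.
move=> [Hip _] bpos coco [mA2 _] _ [mB _] _ /andP[t0 t1] _ d0 _ a0 aleq [G _].
have Ha : forall k, (k <= K)%N -> 0 < alpha k <= am1.
  elim=> [|k IH] kK; have [_ _ -> _] := G _ kK; rewrite /alpha_prev.
    apply/andP; split; first by rewrite mulr_gt0 // exprn_gt0.
    by apply: ler_piMr; [exact: ltW | apply: exprn_ile1; exact: ltW].
  have /andP[h1 h2] := IH (ltnW kK).
  apply/andP; split; first by rewrite mulr_gt0 // exprn_gt0.
  apply: le_trans h2; by apply: ler_piMr; [exact: ltW | apply: exprn_ile1; exact: ltW].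
move=> k kK; have /andP[ak akm] := Ha k kK.
have [_ _ _ [b [Bb Hres]]] := G _ kK.
set a := alpha k in ak akm Hres *.
set X := x k in Hres *; set Xb := xbar k in Bb Hres *.
have anz : a != 0 by rewrite gt_eqF.
have Hv : a^-1 *: (X - Xb) = b + (A1 X + A2 X).
  have -> : X - Xb = a *: b + a *: (A1 X + A2 X).
    have hX : X = Xb + a *: b + a *: (A1 X + A2 X) by rewrite -Hres subrK.
    rewrite {1}hX. rewrite -[Xb + _ + _]addrA. rewrite [_ - Xb]addrC. by rewrite addKr.
  by rewrite scalerDr !scalerA mulVf // !scale1r.
have Hi : a^-1 *: (X - Xb) - (A2 X - A2 Xb) = A2 Xb + b + A1 X.
  by rewrite Hv L1.
split; first by exists b.
move=> z [bz [Bz Hz]].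
rewrite /Tset Hi.
set w := A1 X - A1 z.
set m := (A2 Xb + b) - (A2 z + bz).
set d := X - Xb.
set e := X - z.
have -> : A2 Xb + b + A1 X = w + m by exact: L2.
have -> : z - Xb = d - e.
  exact: L3.
have Hm : 0 <= ip (e - d) m.
  have -> : e - d = Xb - z by exact: L4.
  have := mA2 _ _ _ _ (erefl (A2 Xb)) (erefl (A2 z)) .
  have := mB _ _ _ _ Bb Bz.
  rewrite /m opprD addrACA !(ipDr Hip) !(ipNr Hip); lra.
have Hc := coco X z; rewrite -/w -/e !(hnorm2 Hip) in Hc.
clearbody w m d e.
have Hp := ip_ge0 Hip (2 * beta *: w - d).
rewrite (hnorm2 Hip).
move: Hm Hc Hp; rewrite !(ipBl Hip, ipBr Hip, ipDl Hip, ipDr Hip, ipZl Hip, ipZr Hip, ipNl Hip, ipNr Hip).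
rewrite (ipC Hip d w) (ipC Hip d m) (ipC Hip e m).
have hd := ip_ge0 Hip d.
move=> Hm Hc Hp.
apply: (@fin _ _ _ _ _ _ _ _ _ _ _ ak bpos akm aleq hd _ Hc Hp); lra.
Qed.
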